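(* Let $k$ be a commutative ring with unit and $A=k[t_1,\ldots,t_r]$ graded with each $t_i$ of degree $2$. Let $M$ be a graded $A$-module, bounded from below, with $\operatorname{Tor}^A_1(M,k)=0$. Let $S\subset A$ be the multiplicative subset generated by those elements of $A^2$ which can be extended to a basis of the $k$-module $A^2$. Then the localisation map $M\to S^{-1}M$ is injective.
   Context: $A^2$ is the degree-$2$ part of $A$, i.e. the free $k$-module with basis $t_1,\ldots,t_r$; its elements are called linear. $k$ is an $A$-module via the augmentation sending each $t_i$ to $0$. *)

(* Defs.v *)
From HB Require Import structures.
From mathcomp Require Import all_boot all_algebra.
From mathcomp Require Export mpoly.
Set Implicit Arguments. Unset Strict Implicit. Unset Printing Implicit Defensive.
Import GRing.Theory.
Local Open Scope ring_scope.

(* A = k[t_1,...,t_r] is {mpoly k[r]}; t_i (i : 'I_r) is 'X_i.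
   Grading: t_i has degree 2, so a polynomial homogeneous of standard degree d
   (p \is d.-homog, i.e. all monomials of total degree d) has degree 2*d.
   A^2 is the k-submodule of 1.-homog polynomials (k-linear combinations of
   the t_i). *)

Definition linear_elt (k : comRingType) (r : nat) (p : {mpoly k[r]}) : Prop :=
  p \is 1.-homog.

Definition is_basis_A2 (k : comRingType) (r s : nat) (b : 'I_s -> {mpoly k[r]}) : Prop :=
  [/\ (forall j, linear_elt (b j)),
      (forall p : {mpoly k[r]}, linear_elt p ->
          exists c : 'I_s -> k, p = \sum_(j < s) c j *: b j) &
      (forall c : 'I_s -> k, \sum_(j < s) c j *: b j = 0 -> forall j, c j = 0)].

Definition extendable_linear (k : comRingType) (r : nat) (l : {mpoly k[r]}) : Prop :=
  exists (s : nat) (b : 'I_s -> {mpoly k[r]}) (j0 : 'I_s),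
    is_basis_A2 b /\ l = b j0.

Definition in_S (k : comRingType) (r : nat) (s : {mpoly k[r]}) : Prop :=
  exists ls : seq {mpoly k[r]},
    (forall l, l \in ls -> extendable_linear l) /\ s = \prod_(l <- ls) l.

(* A grading of the A-module M: M = (+)_{n in Z} Mn n (internal direct sum of
   k-submodules), with A^{2d} * Mn n contained in Mn (n + 2d). *)
Definition graded_module (k : comRingType) (r : nat)
    (M : lmodType {mpoly k[r]}) (Mn : int -> {pred M}) : Prop :=
  [/\ (forall n, 0 \in Mn n),
      (forall n x y, x \in Mn n -> y \in Mn n -> x + y \in Mn n),
      (forall n (a : {mpoly k[r]}) (d : nat) x,
          a \is d.-homog -> x \in Mn n -> a *: x \in Mn (n + (2 * d)%:Z)),
      (forall x : M, exists (ns : seq int) (f : int -> M),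
          [/\ uniq ns, (forall n, f n \in Mn n) & x = \sum_(n <- ns) f n]) &
      (forall (ns : seq int) (f : int -> M),
          uniq ns -> (forall n, f n \in Mn n) -> \sum_(n <- ns) f n = 0 ->
          forall n, n \in ns -> f n = 0)].

Definition bounded_below (k : comRingType) (r : nat)
    (M : lmodType {mpoly k[r]}) (Mn : int -> {pred M}) : Prop :=
  exists n0 : int, forall n, n < n0 -> forall x, x \in Mn n -> x = 0.

(* Tor^A_1(M, k) = 0, computed with the Koszul free resolution of
   k = A/(t_1,...,t_r) (t_1..t_r is a regular sequence in A):
   Tor_1 = H_1(K(t) (x)_A M), where K_1 (x) M = M^r -> M is
   (m_i) |-> sum_i t_i m_i, and K_2 (x) M = (wedge^2 A^r) (x) M -> M^r sends an
   alternating family (n_{ji}) to (sum_j t_j n_{ji})_i. *)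
Definition Tor1_k_vanishes (k : comRingType) (r : nat)
    (M : lmodType {mpoly k[r]}) : Prop :=
  forall m : 'I_r -> M,
    \sum_(i < r) 'X_i *: m i = 0 ->
    exists nn : 'I_r -> 'I_r -> M,
      [/\ (forall i, nn i i = 0),
          (forall i j, nn i j = - nn j i) &
          (forall i, m i = \sum_(j < r) 'X_j *: nn j i)].

(* The localisation map M -> S^{-1}M, m |-> m/1, is injective.  By definition
   of S^{-1}M, m/1 = 0 iff s m = 0 for some s in S. *)
Definition localisation_injective (k : comRingType) (r : nat)
    (M : lmodType {mpoly k[r]}) : Prop :=
  forall m : M, (exists s, in_S s /\ s *: m = 0) -> m = 0.

(* Main.v *)
Require Import Defs.
From mathcomp Require Import all_boot all_algebra.
From mathcomp Require Import mpoly zify ring.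
From Stdlib Require Import ClassicalEpsilon.
Set Implicit Arguments. Unset Strict Implicit. Unset Printing Implicit Defensive.
Import GRing.Theory.
Local Open Scope ring_scope.

Lemma sum_if (V : nmodType) (L ns : seq int) (f : int -> V) :
  uniq L -> uniq ns -> {subset ns <= L} ->
  \sum_(n <- L) (if n \in ns then f n else 0) = \sum_(n <- ns) f n.
Proof.
move=> uL uns sub; rewrite -big_mkcond -big_filter; apply: perm_big.
apply: uniq_perm; first exact: filter_uniq.
  exact: uns.
by move=> n; rewrite mem_filter; case: (boolP (n \in ns)) => // /sub ->.
Qed.

Section Proj.
Variables (k : comRingType) (r : nat) (M : lmodType {mpoly k[r]})
  (Mn : int -> {pred M}).
Hypothesis hG : graded_module Mn.

Lemma Mn0 n : 0 \in Mn n. Proof. by case: hG. Qed.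
Lemma MnD n x y : x \in Mn n -> y \in Mn n -> x + y \in Mn n.
Proof. by case: hG => _ h _ _ _; apply: h. Qed.
Lemma MnZ n (a : {mpoly k[r]}) d x : a \is d.-homog -> x \in Mn n ->
  a *: x \in Mn (n + (2 * d)%:Z).
Proof. by case: hG => _ _ h _ _; apply: h. Qed.
Lemma MnN n x : x \in Mn n -> - x \in Mn n.
Proof.
move=> hx; have h1 : (-1 : {mpoly k[r]}) \is 0.-homog by rewrite rpredN dhomog1.
have := MnZ h1 hx.
by rewrite scaleN1r muln0 addr0.
Qed.
Lemma MnB n x y : x \in Mn n -> y \in Mn n -> x - y \in Mn n.
Proof. by move=> hx hy; apply: MnD => //; apply: MnN. Qed.
Lemma Mn1 n (a : {mpoly k[r]}) x : a \is 1.-homog -> x \in Mn n ->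
  a *: x \in Mn (n + 2).
Proof. by move=> ha hx; have := MnZ ha hx; rewrite muln1. Qed.

Definition decP (x : M) (p : seq int * (int -> M)) : Prop :=
  [/\ uniq p.1, (forall n, p.2 n \in Mn n) & x = \sum_(n <- p.1) p.2 n].

Lemma dec_ex x : exists p, decP x p.
Proof.
case: hG => _ _ _ h _; have [ns [f [u hf e]]] := h x.
by exists (ns, f); split.
Qed.

Definition dec x : seq int * (int -> M) :=
  proj1_sig (constructive_indefinite_description _ (dec_ex x)).
Lemma decE x : decP x (dec x).
Proof. rewrite /dec; by case: constructive_indefinite_description. Qed.

Definition supp x := (dec x).1.
Definition pi (n : int) (x : M) : M :=
  if n \in supp x then (dec x).2 n else 0.

Lemma pi_char x ns g : uniq ns -> (forall n, g n \in Mn n) ->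
  x = \sum_(n <- ns) g n -> forall n, pi n x = if n \in ns then g n else 0.
Proof.
move=> uns hg ex n; rewrite /pi /supp.
case: (decE x) => u0 hf0 e0.
set ns0 := (dec x).1 in u0 hf0 e0 *; set f0 := (dec x).2 in u0 hf0 e0 *.
set L := undup (ns0 ++ ns).
set h := fun n => (if n \in ns0 then f0 n else 0) - (if n \in ns then g n else 0).
have uL : uniq L by apply: undup_uniq.
have hh : forall n, h n \in Mn n.
  by move=> m; rewrite /h; apply: MnB; case: ifP => _; rewrite ?Mn0.
have sh : \sum_(n <- L) h n = 0.
  rewrite sumrB !sum_if //; first by rewrite -e0 -ex subrr.
    by move=> m hm; rewrite mem_undup mem_cat hm orbT.
  by move=> m hm; rewrite mem_undup mem_cat hm.
case: hG => _ _ _ _ hU.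
have := hU L h uL hh sh n.
case: (boolP (n \in L)) => [nL /(_ isT) /eqP|].
  by rewrite /h subr_eq0 => /eqP.
rewrite mem_undup mem_cat negb_or => /andP [/negbTE -> /negbTE ->] //.
Qed.

Lemma pi_in n m x : x \in Mn n -> pi m x = if m == n then x else 0.
Proof.
move=> hx; rewrite (@pi_char x [:: n] (fun m => if m == n then x else 0)) //.
- by rewrite inE; case: eqP.
- by move=> p; case: eqP => [->|]; rewrite ?Mn0.
- by rewrite big_seq1 eqxx.
Qed.

Lemma pi0 n : pi n 0 = 0.
Proof. by rewrite (@pi_in 0 n 0 (Mn0 0)); case: eqP. Qed.

Lemma pi_dec x n : pi n x = if n \in (dec x).1 then (dec x).2 n else 0.
Proof. by []. Qed.

Lemma piD n x y : pi n (x + y) = pi n x + pi n y.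
Proof.
case: (decE x) => u1 h1 e1; case: (decE y) => u2 h2 e2.
set ns1 := (dec x).1 in u1 h1 e1 *; set f1 := (dec x).2 in u1 h1 e1 *.
set ns2 := (dec y).1 in u2 h2 e2 *; set f2 := (dec y).2 in u2 h2 e2 *.
set L := undup (ns1 ++ ns2).
set g := fun n => (if n \in ns1 then f1 n else 0) + (if n \in ns2 then f2 n else 0).
have uL : uniq L by apply: undup_uniq.
have hg : forall n, g n \in Mn n.
  by move=> m; rewrite /g; apply: MnD; case: ifP => _; rewrite ?Mn0.
have ex : x + y = \sum_(n <- L) g n.
  rewrite big_split /= !sum_if // -?e1 -?e2 //.
    by move=> m hm; rewrite mem_undup mem_cat hm orbT.
  by move=> m hm; rewrite mem_undup mem_cat hm.
rewrite (pi_char uL hg ex) !pi_dec -/ns1 -/ns2 -/f1 -/f2.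
case: (boolP (n \in L)) => // ; rewrite mem_undup mem_cat negb_or.
by case/andP => /negbTE -> /negbTE ->; rewrite addr0.
Qed.

Lemma piN n x : pi n (- x) = - pi n x.
Proof. by apply/eqP; rewrite -addr_eq0 -piD addNr pi0. Qed.

Lemma pi_sum n (I : Type) (s : seq I) (P : pred I) (F : I -> M) :
  pi n (\sum_(i <- s | P i) F i) = \sum_(i <- s | P i) pi n (F i).
Proof. exact: (big_morph (pi n) (piD n) (pi0 n)). Qed.

Lemma piZ (a : {mpoly k[r]}) n x : a \is 1.-homog ->
  pi n (a *: x) = a *: pi (n - 2) x.
Proof.
move=> ha; case: (decE x) => u1 h1 e1.
set ns := (dec x).1 in u1 h1 e1 *; set f := (dec x).2 in u1 h1 e1 *.
have inj : injective (fun m : int => m + 2) by apply: addIr.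
have u2 : uniq (map (fun m : int => m + 2) ns) by rewrite map_inj_uniq.
have hg : forall m, (fun m => a *: f (m - 2)) m \in Mn m.
  by move=> m /=; have := Mn1 ha (h1 (m - 2)); rewrite subrK.
have ex : a *: x = \sum_(m <- map (fun m : int => m + 2) ns) a *: f (m - 2).
  by rewrite big_map e1 scaler_sumr; apply: eq_bigr => m _; rewrite addrK.
rewrite (pi_char u2 hg ex) pi_dec -/ns -/f.
have -> : (n \in map (fun m : int => m + 2) ns) = (n - 2 \in ns).
  by rewrite -{1}(subrK 2 n) (mem_map inj).
by case: ifP; rewrite ?scaler0.
Qed.

Lemma pi_recon x S : uniq S -> {subset supp x <= S} -> x = \sum_(n <- S) pi n x.
Proof.
move=> uS sub; case: (decE x) => u1 h1 e1.
by rewrite /pi sum_if.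
Qed.

Lemma pi_hom n x : pi n x \in Mn n.
Proof. by rewrite pi_dec; case: ifP; rewrite ?Mn0 //; case: (decE x). Qed.

End Proj.

Section Kos.
Variables (k : comRingType) (r : nat) (M : lmodType {mpoly k[r]})
  (Mn : int -> {pred M}).
Hypothesis hG : graded_module Mn.
Variables (n0 : int).
Hypothesis hn0 : forall n, n < n0 -> forall x, x \in Mn n -> x = 0.
Variables (I : finType) (y : I -> {mpoly k[r]}).
Hypothesis hy : forall i, y i \is 1.-homog.

Definition alt (N : I -> I -> M) := (forall i, N i i = 0) /\ (forall i j, N i j = - N j i).
Definition H1 (P : {set I}) := forall m : I -> M, \sum_(i in P) y i *: m i = 0 ->
  exists N, alt N /\ forall i, i \in P -> m i = \sum_(j in P) y j *: N j i.

Lemma sum_PQ (P : {set I}) j (F : I -> M) :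
  \sum_(i in P) (if i \in P :\ j then F i else 0) = \sum_(i in P :\ j) F i.
Proof.
rewrite -big_mkcondr; apply: eq_bigl => i; rewrite in_setD1.
by case: (i \in P); rewrite ?andbT ?andbF.
Qed.

Lemma sum_D1 (P : {set I}) j (F : I -> M) : j \in P ->
  \sum_(i in P) F i = F j + \sum_(i in P :\ j) F i.
Proof.
move=> jP; rewrite (bigD1 j jP) /=; congr (_ + _); apply: eq_bigl => i.
by rewrite in_setD1 andbC.
Qed.

Lemma strip_hom P j (HP : H1 P) (jP : j \in P) (kk : nat) : forall D : int,
  D < n0 + kk%:Z -> forall z : I -> M, (forall i, z i \in Mn D) ->
  \sum_(i in P :\ j) y i *: z i = 0 ->
  exists N, alt N /\ forall i, i \in P :\ j -> z i = \sum_(l in P :\ j) y l *: N l i.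
Proof.
elim: kk => [|kk IH] D hD z hz cyc.
  exists (fun _ _ => 0); split; first by split => // *; rewrite oppr0.
  move=> i _; rewrite (hn0 _ (hz i)); last by rewrite addr0 in hD.
  by rewrite big1 // => l _; rewrite scaler0.
set Q := P :\ j.
set m := fun i => if i \in Q then z i else 0.
have cm : \sum_(i in P) y i *: m i = 0.
  rewrite -[RHS]cyc -(sum_PQ P j); apply: eq_bigr => i _; rewrite /m.
  by case: ifP; rewrite ?scaler0.
have [N [[N0 NA] eN]] := HP m cm.
set N' := fun l i => pi hG (D - 2) (N l i).
have N'0 : forall i, N' i i = 0 by move=> i; rewrite /N' N0 pi0.
have N'A : forall i l, N' i l = - N' l i by move=> i l; rewrite /N' NA piN.
have mhom : forall i, m i \in Mn D by move=> i; rewrite /m; case: ifP; rewrite ?Mn0.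
have eN' : forall i, i \in P -> m i = \sum_(l in P) y l *: N' l i.
  move=> i iP; have e0 : pi hG D (m i) = m i by rewrite (pi_in hG _ (mhom i)) eqxx.
  rewrite -e0 (eN i iP) pi_sum.
  by apply: eq_bigr => l _; rewrite piZ.
have mj : m j = 0 by rewrite /m setD11.
have cw : \sum_(i in Q) y i *: N' j i = 0.
  have := eN' j jP; rewrite mj (sum_D1 _ jP) N'0 scaler0 add0r => e.
  apply/eqP; rewrite -oppr_eq0 -sumrN; apply/eqP; rewrite [RHS]e.
  by apply: eq_bigr => i _; rewrite N'A scalerN opprK.
have hw : forall i, N' j i \in Mn (D - 2) by move=> i; apply: pi_hom.
have hD' : D - 2 < n0 + kk%:Z by move: hD; rewrite -addn1 PoszD; lia.
have [Pm [[Pm0 PmA] ePm]] := IH (D - 2) hD' (fun i => N' j i) hw cw.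
exists (fun l i => y j *: Pm l i + N' l i); split.
  split=> [i|i l]; first by rewrite Pm0 N'0 scaler0 addr0.
  by rewrite PmA N'A scalerN opprD.
move=> i iQ.
have iP : i \in P by move: iQ; rewrite in_setD1 => /andP[].
have -> : z i = m i by rewrite /m iQ.
rewrite (eN' i iP) (sum_D1 _ jP) (ePm i iQ) scaler_sumr -big_split /=.
apply: eq_bigr => l _; rewrite scalerDr !scalerA mulrC.
by [].
Qed.

Lemma strip P j : H1 P -> j \in P -> H1 (P :\ j).
Proof.
move=> HP jP z cyc.
set Q := P :\ j.
have hom : forall D : int, exists N, alt N /\
    forall i, i \in Q -> pi hG D (z i) = \sum_(l in Q) y l *: N l i.
  move=> D; apply: (@strip_hom P j HP jP `|D - n0|.+1 D).
  - lia.
  - by move=> i; apply: pi_hom.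
  - rewrite -[RHS](pi0 hG (D + 2)) -[in RHS]cyc pi_sum; apply: eq_bigr => i _.
    by rewrite piZ // addrK.
set Nf := fun D => proj1_sig (constructive_indefinite_description _ (hom D)).
have NfP : forall D, alt (Nf D) /\
    forall i, i \in Q -> pi hG D (z i) = \sum_(l in Q) y l *: Nf D l i.
  by move=> D; rewrite /Nf; case: constructive_indefinite_description.
set S := undup (flatten [seq supp hG (z i) | i <- enum I]).
exists (fun l i => \sum_(D <- S) Nf D l i); split.
  split=> [i|i l]; first by rewrite big1 // => D _; case: (NfP D) => [[-> _] _].
  by rewrite -sumrN; apply: eq_bigr => D _; case: (NfP D) => [[_ ->] _].
move=> i iQ.
rewrite (@pi_recon _ _ _ _ hG (z i) S (undup_uniq _)); last first.
  move=> n hn; rewrite mem_undup; apply/flattenP; exists (supp hG (z i)) => //.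
  by apply: map_f; rewrite mem_enum.
under eq_bigr => D _ do rewrite (proj2 (NfP D) i iQ).
rewrite exchange_big /=; apply: eq_bigr => l _; by rewrite scaler_sumr.
Qed.

Lemma reduce (j0 : I) (n : nat) : forall P : {set I}, (#|P| <= n)%N -> j0 \in P -> H1 P -> H1 [set j0].
Proof.
elim: n => [|n IH] P hc j0P HP.
  by move: hc; rewrite leqn0 => /eqP/cards0_eq => E; rewrite E inE in j0P.
case: (pickP (fun j => (j \in P) && (j != j0))) => [j /andP[jP jj0] | none].
  apply: (IH (P :\ j)).
  - by move: hc; rewrite (cardsD1 j P) jP add1n ltnS.
  - by rewrite in_setD1 eq_sym jj0.
  - exact: strip.
have -> : [set j0] = P; last by [].
apply/setP => i; rewrite inE; have := none i; case: eqP => [->|_] //=.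
by case: (i \in P).
Qed.

Lemma H1_nzd j0 : H1 [set: I] -> forall m : M, y j0 *: m = 0 -> m = 0.
Proof.
move=> HT m hm.
have H := @reduce j0 #|[set: I]| [set: I] (leqnn _) (in_setT _) HT.
have cyc : \sum_(i in [set j0]) y i *: (fun i => if i == j0 then m else 0) i = 0.
  by rewrite big_set1 eqxx.
have [N [[N0 _] eN]] := H _ cyc.
by have := eN j0 (set11 j0); rewrite eqxx big_set1 N0 scaler0.
Qed.

End Kos.

Section Trans.
Variables (k : comRingType) (r : nat) (M : lmodType {mpoly k[r]}).

Lemma lin_decomp (p : {mpoly k[r]}) : p \is 1.-homog ->
  p = \sum_(i < r) p@_U_(i) *: 'X_i.
Proof.
move=> hp; apply/mpolyP => m; rewrite raddf_sum /=.
case: (boolP (mdeg m == 1%N)) => [/mdeg1P [j /eqP ->] | hm].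
  rewrite (bigD1 j) //= mcoeffZ mcoeffXU eqxx mulr1 big1 ?addr0 // => i hij.
  by rewrite mcoeffZ mcoeffXU (negbTE hij) mulr0.
rewrite (dhomog_nemf_coeff hp hm) big1 // => i _.
rewrite mcoeffZ mcoeffX; case: eqP => [E|]; last by rewrite mulr0.
by move: hm; rewrite -E mdeg1.
Qed.

Lemma alt_sum (n : nat) (N : 'I_n -> 'I_n -> M) (g : 'I_n -> 'I_n -> {mpoly k[r]}) :
  alt N ->
  \sum_(i < n) \sum_(l < n) g l i *: N l i =
  \sum_(i < n) \sum_(l < n) (if (l < i)%N then g l i - g i l else 0) *: N l i.
Proof.
move=> [N0 NA].
transitivity (\sum_(i < n) \sum_(l < n) ((if (l < i)%N then g l i *: N l i else 0) +
                             (if (i < l)%N then g l i *: N l i else 0))).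
  apply: eq_bigr => i _; apply: eq_bigr => l _.
  case: ltngtP => [h|h|h]; rewrite ?addr0 ?add0r //.
  by rewrite (_ : l = i) ?N0 ?scaler0 ?addr0 //; apply: val_inj.
rewrite (eq_bigr (fun i : 'I_n => \sum_(l < n) (if (l < i)%N then g l i *: N l i else 0) +
            \sum_(l < n) (if (i < l)%N then g l i *: N l i else 0))); last first.
  by move=> i _; rewrite big_split.
rewrite big_split /= [X in _ + X]exchange_big /= -big_split /=.
apply: eq_bigr => i _; rewrite -big_split /=; apply: eq_bigr => l _.
case: ifP => _; last by rewrite scale0r addr0.
by rewrite scalerBl (NA i l) scalerN.
Qed.

Lemma transfer s (b : 'I_s -> {mpoly k[r]}) :
  Tor1_k_vanishes M -> is_basis_A2 b -> H1 M b [set: 'I_s].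
Proof.
move=> hT [hb hspan hind] m cyc.
have cyc' : \sum_j b j *: m j = 0.
  by rewrite -[RHS]cyc; apply: eq_bigl => j; rewrite in_setT.
set B := fun i j => (b j)@_U_(i).
have eb : forall j, b j = \sum_i B i j *: 'X_i.
  by move=> j; rewrite /B; exact: (lin_decomp (hb j)).
have hX : forall i : 'I_r, exists c, 'X_i = \sum_j c j *: b j.
  by move=> i; apply: hspan; rewrite /linear_elt dhomogX; apply/eqP; exact: mdeg1.
set T := fun i => proj1_sig (constructive_indefinite_description _ (hX i)).
have eT : forall i, 'X_i = \sum_j T i j *: b j.
  by move=> i; rewrite /T; case: constructive_indefinite_description.
have TB : forall j j2, \sum_i B i j2 * T i j = (j == j2)%:R.
  move=> j j2; apply/eqP; rewrite -subr_eq0; apply/eqP.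
  apply: (hind (fun j => \sum_i B i j2 * T i j - (j == j2)%:R) _ j).
  under eq_bigr do rewrite scalerBl.
  rewrite sumrB; apply/eqP; rewrite subr_eq0; apply/eqP.
  rewrite [RHS](bigD1 j2) //= eqxx scale1r [X in _ + X]big1 ?addr0; last first.
    by move=> j' /negbTE ->; rewrite scale0r.
  under eq_bigr do rewrite scaler_suml.
  rewrite exchange_big /= [RHS]eb; apply: eq_bigr => i _.
  by rewrite eT scaler_sumr; apply: eq_bigr => j' _; rewrite scalerA.
set m' := fun i => \sum_j (B i j)%:MP *: m j.
have cm : \sum_(i < r) 'X_i *: m' i = 0.
  rewrite -[RHS]cyc'; under eq_bigr do rewrite scaler_sumr.
  rewrite exchange_big /=; apply: eq_bigr => j _.
  rewrite [b j]eb scaler_suml; apply: eq_bigr => i _.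
  by rewrite scalerA -mul_mpolyC mulrC.
have [N [N0 NA em']] := hT m' cm.
exists (fun a c => \sum_(i < r) \sum_(l < r)
   (if (l < i)%N then (T l a * T i c - T i a * T l c)%:MP else 0) *: N l i).
split; first split.
- move=> a; apply: big1 => i _; apply: big1 => l _.
  rewrite [T i a * _]mulrC subrr.
  by case: ifP => _; rewrite ?raddf0 scale0r.
- move=> a c; rewrite -sumrN; apply: eq_bigr => i _; rewrite -sumrN.
  apply: eq_bigr => l _; rewrite -scaleNr; congr (_ *: _).
  case: ifP => _; rewrite ?oppr0 // -raddfN; congr (_%:MP).
  by rewrite opprB [T l a * _]mulrC [T i a * _]mulrC.
move=> j _.
have step1 : m j = \sum_i (T i j)%:MP *: m' i.
  under eq_bigr do rewrite /m' scaler_sumr.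
  rewrite exchange_big /=.
  under eq_bigr do (under eq_bigr do rewrite scalerA -mpolyCM; rewrite -scaler_suml -raddf_sum /=).
  have TB' : forall i, \sum_l T l j * B l i = (j == i)%:R.
    by move=> i; rewrite -TB; apply: eq_bigr => l _; rewrite mulrC.
  under eq_bigr do rewrite TB'.
  rewrite (bigD1 j) //= eqxx rmorph1 scale1r big1 ?addr0 // => i.
  by rewrite eq_sym => /negbTE ->; rewrite raddf0 scale0r.
have E : forall j', \sum_(i < r) \sum_(l < r) (if (l < i)%N then (T l j' * T i j - T i j' * T l j)%:MP else 0) *: N l i
   = \sum_(i < r) \sum_(l < r) (T l j' * T i j)%:MP *: N l i.
  move=> j'; rewrite (@alt_sum r N (fun l i => (T l j' * T i j)%:MP)) //=.
  by apply: eq_bigr => i _; apply: eq_bigr => l _; case: ifP; rewrite ?raddfB.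
rewrite (eq_bigl predT); last by move=> j'; rewrite in_setT.
under [RHS]eq_bigr do rewrite E !scaler_sumr.
rewrite step1 (eq_bigr (fun i => (T i j)%:MP *: \sum_(l < r) 'X_l *: N l i)); last by move=> i _; rewrite em'.
under eq_bigr do rewrite scaler_sumr.
under eq_bigr do under eq_bigr do rewrite (eT _) scaler_suml scaler_sumr.
under eq_bigr do rewrite exchange_big.
rewrite exchange_big; apply: eq_bigr => j' _; apply: eq_bigr => i _.
rewrite scaler_sumr; apply: eq_bigr => l _; rewrite !scalerA; congr (_ *: _).
rewrite -mul_mpolyC mpolyCM; ring.
Qed.
End Trans.

Theorem lemma2p5 (k : comRingType) (r : nat) (M : lmodType {mpoly k[r]})
    (Mn : int -> {pred M}) :
  graded_module Mn -> bounded_below Mn -> Tor1_k_vanishes M ->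
  localisation_injective M.
Proof.
move=> hG [n0 hn0] hT m [s0 [[ls [hls E]] hsm]]; subst s0.
elim: ls m hls hsm => [|l ls IH] m hls hsm.
  by move: hsm; rewrite big_nil scale1r.
move: hsm; rewrite big_cons -scalerA => hsm.
have [s' [b [j0 [hb El]]]] := hls l (mem_head _ _).
subst l.
have hb1 : forall j, b j \is 1.-homog by case: hb.
have nz := H1_nzd hG hn0 hb1 (transfer hT hb) hsm.
by apply: (IH m _ nz) => l' hl'; apply: hls; rewrite inE hl' orbT.
Qed.
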